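(* Let $m$ and $n$ be integers with $n > m > 2$, and define the groups \[G=\langle x,y,z \mid z=[y,x],\ x^{2^n}=y^{2^m}=z^4=1,\ z^x=z^{-1},\ z^y=z^{-1}\rangle,\] \[H=\langle a,b,c \mid c=[b,a],\ a^{2^n}=b^{2^m}=c^4=1,\ c^a=c^{-1},\ c^b=c\rangle.\] Then $G$ and $H$ are not isomorphic.
   Context: Commutators are $[g,h]=g^{-1}h^{-1}gh$ and $g^h = h^{-1}gh$. *)

(* Defs.v *)
From mathcomp Require Import all_boot all_fingroup.
Set Implicit Arguments.
Unset Strict Implicit.
Unset Printing Implicit Defensive.

(* Main.v *)
Require Import Defs.
From mathcomp Require Import all_boot all_fingroup.
From HB Require Import structures.
From mathcomp Require Import all_algebra.
From mathcomp Require Import ring.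
Set Implicit Arguments.
Unset Strict Implicit.
Unset Printing Implicit Defensive.
Import GRing.Theory.
Local Open Scope ring_scope.

Section Base.
Variables n m : nat.
Local Notation N := (2 ^ n.+1)%N.
Local Notation M := (2 ^ m.+2)%N.

Lemma N_gt1 : (1 < N)%N. Proof. by rewrite (ltn_exp2l 0). Qed.
Lemma M_gt1 : (1 < M)%N. Proof. by rewrite (ltn_exp2l 0). Qed.

Definition parN (i : 'Z_N) := odd (nat_of_ord i).
Definition parM (j : 'Z_M) := odd (nat_of_ord j).
Definition castM (j : 'Z_M) : 'Z_4 := (nat_of_ord j)%:R.

Lemma parND i j : parN (i + j)%R = parN i (+) parN j.
Proof.
have h : odd (Zp_trunc N).+2 = false by rewrite Zp_cast ?N_gt1 // oddX.
by rewrite /parN /= odd_mod ?oddD.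
Qed.

Lemma parMD i j : parM (i + j)%R = parM i (+) parM j.
Proof.
have h : odd (Zp_trunc M).+2 = false by rewrite Zp_cast ?M_gt1 // oddX.
by rewrite /parM /= odd_mod ?oddD.
Qed.

Lemma castMD i j : castM (i + j)%R = (castM i + castM j)%R.
Proof.
have h : (4 %| (Zp_trunc M).+2)%N by rewrite Zp_cast ?M_gt1 // !expnS mulnA dvdn_mulr.
rewrite /castM -natrD /=.
rewrite -(@Zp_nat_mod 4 _ (_ %% _)) // -[RHS](@Zp_nat_mod 4) //.
by rewrite modn_dvdm.
Qed.

Lemma parN1 : parN (1 : 'Z_N)%R = true.
Proof. by []. Qed.
Lemma parM1 : parM (1 : 'Z_M)%R = true.
Proof. by []. Qed.
Lemma parN0 : parN 0 = false. Proof. by []. Qed.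
Lemma parM0 : parM 0 = false. Proof. by []. Qed.
Lemma castM0 : castM 0 = 0%R. Proof. by []. Qed.

Lemma parNN i : parN (- i)%R = parN i.
Proof. by apply/eqP; rewrite -[parN i]addbF -parN0 -(subrr i) parND addbA addbb addFb. Qed.
Lemma parMN i : parM (- i)%R = parM i.
Proof. by apply/eqP; rewrite -[parM i]addbF -parM0 -(subrr i) parMD addbA addbb addFb. Qed.
Lemma castMN i : castM (- i)%R = (- castM i)%R.
Proof. by apply/eqP; rewrite -subr_eq0 opprK -castMD addNr. Qed.


Definition sg (b : bool) : 'Z_4 := if b then -1 else 1.

Definition GT : Type := ('Z_N * 'Z_M * 'Z_4)%type.
HB.instance Definition _ := Finite.copy GT ('Z_N * 'Z_M * 'Z_4)%type.

Definition mulG (g h : GT) : GT :=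
  let: (i, j, k) := g in let: (i', j', k') := h in
  (i + i', j + j', (if parN i' && parM j then sg (parM j') else 0) + k * sg (parN i' (+) parM j') + k').
Definition oneG : GT := (0, 0, 0).
Definition invG (g : GT) : GT :=
  let: (i, j, k) := g in
  (- i, - j, - (k + (if parN i && parM j then sg (parM j) else 0)) * sg (parN i (+) parM j)).

Lemma sgK b : sg b * sg b = 1.
Proof. by case: b; rewrite /sg ?mulrNN mulr1. Qed.

Lemma mulGA : associative mulG.
Proof.
move=> [[i1 j1] k1] [[i2 j2] k2] [[i3 j3] k3]; rewrite /mulG /= !parND !parMD.
congr (_, _, _); rewrite ?addrA //.
by case: (parN i2); case: (parN i3); case: (parM j1); case: (parM j2); case: (parM j3); rewrite /sg /=; ring.
Qed.

Lemma mul1G : left_id oneG mulG.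
Proof. by move=> [[i j] k]; rewrite /mulG /oneG /= parM0 andbF mul0r !add0r. Qed.

Lemma mulVG : left_inverse oneG invG mulG.
Proof.
move=> [[i j] k]; rewrite /mulG /invG /oneG /= parMN !addNr; congr (_, _, _).
rewrite -mulrA sgK mulr1; case: (parN i && parM j); ring.
Qed.

HB.instance Definition _ := Finite_isGroup.Build GT mulGA mul1G mulVG.


Lemma mulGE (g h : GT) : (g * h)%g = mulG g h. Proof. by []. Qed.
Lemma oneGE : (1 : GT)%g = oneG. Proof. by []. Qed.

Definition HT : Type := ('Z_N * 'Z_M * 'Z_4)%type.
HB.instance Definition _ := Finite.copy HT ('Z_N * 'Z_M * 'Z_4)%type.

Definition mulH (g h : HT) : HT :=
  let: (i, j, k) := g in let: (i', j', k') := h in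
  (i + i', j + j', (if parN i' then castM j else 0) + k * sg (parN i') + k').
Definition oneH : HT := (0, 0, 0).
Definition invH (g : HT) : HT :=
  let: (i, j, k) := g in
  (- i, - j, ((if parN i then castM j else 0) - k) * sg (parN i)).

Lemma mulHA : associative mulH.
Proof.
move=> [[i1 j1] k1] [[i2 j2] k2] [[i3 j3] k3]; rewrite /mulH /= !parND castMD.
congr (_, _, _); rewrite ?addrA //.
by case: (parN i2); case: (parN i3); rewrite /sg /=; ring.
Qed.

Lemma mul1H : left_id oneH mulH.
Proof. by move=> [[i j] k]; rewrite /mulH /oneH /= castM0 mul0r if_same !add0r. Qed.

Lemma mulVH : left_inverse oneH invH mulH.
Proof.
move=> [[i j] k]; rewrite /mulH /invH /oneH /= castMN !addNr; congr (_, _, _).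
rewrite -mulrA sgK mulr1; case: (parN i); ring.
Qed.

HB.instance Definition _ := Finite_isGroup.Build HT mulHA mul1H mulVH.

Lemma mulHE (g h : HT) : (g * h)%g = mulH g h. Proof. by []. Qed.
Lemma oneHE : (1 : HT)%g = oneH. Proof. by []. Qed.

End Base.

Close Scope ring_scope.

Section P3.
Variables n m : nat.
Hypothesis hmn : m.+2 < n.+1.
Local Notation N := (2 ^ n.+1)%N.
Local Notation M := (2 ^ m.+2)%N.

Lemma mulH1 (g h : HT n m) : (mulH g h).1.1 = (g.1.1 + h.1.1)%R.
Proof. by case: g => [[? ?] ?]; case: h => [[? ?] ?]. Qed.

Lemma HTpow1 (g : HT n m) t : (g ^+ t)%g.1.1 = (g.1.1 *+ t)%R.
Proof.
elim: t => [|t IH]; first by rewrite expg0 mulr0n.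
by rewrite expgS mulHE mulH1 IH mulrS.
Qed.

Lemma odd_pow_ne (i : nat) : odd i -> ~~ (N %| i * M)%N.
Proof.
move=> oi; apply/negP => hd.
have : (2 * M %| i * M)%N.
  apply: dvdn_trans hd; rewrite -expnS dvdn_exp2l //.
by rewrite dvdn_pmul2r ?expn_gt0 // dvdn2 oi.
Qed.

Lemma parN_powM (i : 'Z_N) : (i *+ M)%R = 0%R -> parN i = false.
Proof.
move=> h; apply/negbTE/negP => oi.
have := odd_pow_ne oi; apply/negP/negPn.
have := congr1 (@nat_of_ord _) h; rewrite Zp_mulrn /= [X in _ %% X]Zp_cast ?N_gt1 // => /eqP.
by rewrite -/(dvdn _ _).
Qed.



Lemma Z4_4 (t : 'Z_4) : (t + t + t + t = 0)%R.
Proof. by apply/val_inj; case: t => [[|[|[|[|k]]]] //=]. Qed.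

Lemma castM_par (j : 'Z_M) : (castM j + castM j = 0)%R -> parM j = false.
Proof.
have -> : parM j = odd (nat_of_ord (castM j)).
  by rewrite /parM /castM val_Zp_nat // odd_mod.
move: (castM j) => t; case: t => [[|[|[|[|k]]]] //=] ht h; by move: h => /(congr1 val).
Qed.

Definition Sab (a b : bool) : {set HT n m} :=
  [set g | (a && parN g.1.1) (+) (b && parM g.1.2) == false].

Lemma Sab_group a b : group_set (Sab a b).
Proof.
apply/group_setP; split; first by rewrite inE /= !andbF.
move=> [[i j] k] [[i' j'] k']; rewrite !inE mulHE /mulH /= parND parMD.
by case: a; case: b; case: (parN i); case: (parN i'); case: (parM j); case: (parM j').
Qed.

Lemma HT_notG (x y z : HT n m) :
  (<[x]> <*> <[y]> <*> <[z]>)%g = [set: HT n m] -> z = [~ y, x]%g ->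
  (y ^+ M)%g = 1%g -> (z ^ y)%g = (z^-1)%g -> False.
Proof.
move=> defH r1 r3 r6.
have R1 : (y * x = x * y * z)%g by rewrite r1; apply: commgC.
have R6 : (z * y * z = y)%g by rewrite (conjgC z y) r6 mulgKV.
have py : parN y.1.1 = false.
  by apply: parN_powM; rewrite -HTpow1 r3.
have subS a b w : w \notin Sab a b ->
    x \in Sab a b -> y \in Sab a b -> z \in Sab a b -> False.
  move=> wS xS yS zS.
  have : [set: HT n m] \subset Group (Sab_group a b).
    by rewrite -defH !join_subG !cycle_subG /= xS yS zS.
  by move/subsetP/(_ w (in_setT w)); apply/negP.
clear r1 r3 r6; move: x y z defH R1 R6 py subS => [[ix jx] kx] [[iy jy] ky] [[iz jz] kz] defH R1 R6 py subS; rewrite /= in py.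
rewrite !mulHE in R1 R6.
have e1 := congr1 (fun g => g.1.1) R1; have e2 := congr1 (fun g => g.1.2) R1.
have e3 := congr1 (fun g => g.2) R1; have e6 := congr1 (fun g => g.2) R6.
rewrite /mulH /= in e1 e2 e3 e6.
have iz0 : iz = 0%R by apply: (addrI (ix + iy)%R); rewrite -e1 addr0 addrC.
have jz0 : jz = 0%R by apply: (addrI (jx + jy)%R); rewrite -e2 addr0 addrC.
subst iz jz; rewrite parN0 py /sg /= in e3 e6.
case pix : (parN ix) in e3.
  have hc : castM jy = ((0 + (0 + kx * 1 + ky) * 1 + kz) - kx + ky)%R by rewrite -e3; ring.
  have h2 : (kz + kz = (0 + (0 + kz * 1 + ky) * 1 + kz) - ky)%R by ring.
  rewrite e6 subrr in h2.
  have pjy : parM jy = false.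
    apply: castM_par; rewrite hc.
    transitivity ((kz + kz) + (ky + ky + ky + ky))%R; first ring.
    by rewrite h2 Z4_4 addr0.
  apply: (subS (parM jx) true (0%R, 1%R, 0%R)); rewrite !inE /= ?parN0 ?parM0 ?parM1 ?pix ?py ?pjy ?andbF //.
  by rewrite andbT addbb.
apply: (subS true false (1%R, 0%R, 0%R)); rewrite !inE /= ?parN0 ?parN1 ?pix ?py //.
Qed.

End P3.

Section Z4.
Variables (rT : finGroupType) (z : rT).
Hypothesis r4 : (z ^+ 4 = 1)%g.
Local Open Scope group_scope.

Definition zp (k : 'Z_4) := z ^+ (nat_of_ord k).
Lemma zpD a b : zp (a + b)%R = zp a * zp b.
Proof. by rewrite /zp /= expg_mod // expgD. Qed.
Lemma zp0 : zp 0%R = 1. Proof. by rewrite /zp expg0. Qed.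
Lemma zp1 : zp 1%R = z. Proof. by rewrite /zp expg1. Qed.
Lemma zpN a : zp (- a)%R = (zp a)^-1.
Proof. by apply: (mulIg (zp a)); rewrite -zpD addNr zp0 mulVg. Qed.
Lemma zpD' a b w : zp a * (zp b * w) = zp (a + b)%R * w.
Proof. by rewrite mulgA zpD. Qed.
Lemma zpJinv w a : z ^ w = z^-1 -> zp a ^ w = zp (- a)%R.
Proof. by move=> h; rewrite zpN /zp conjXg h expVgn. Qed.
Lemma zpJinvX w a t : z ^ w = z^-1 -> zp a ^ (w ^+ t) = zp (a * sg (odd t))%R.
Proof.
move=> h; elim: t => [|t IH]; first by rewrite conjg1 /sg /= mulr1.
rewrite expgSr conjgM IH zpJinv //; congr zp.
by rewrite /sg /=; case: (odd t) => /=; ring. Qed.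
Lemma zpJinvX' w a t u : z ^ w = z^-1 -> zp a * (w ^+ t * u) = w ^+ t * (zp (a * sg (odd t))%R * u).
Proof. by move=> h; rewrite mulgA (conjgC (zp a)) zpJinvX // mulgA. Qed.
End Z4.

Section TargetG.
Variables (n m : nat) (rT : finGroupType) (x y z : rT).
Local Notation N := (2 ^ n.+1)%N.
Local Notation M := (2 ^ m.+2)%N.
Local Open Scope group_scope.
Hypotheses (r1 : z = [~ y, x]) (r2 : x ^+ N = 1) (r3 : y ^+ M = 1) (r4 : z ^+ 4 = 1)
  (r5 : z ^ x = z^-1) (r6 : z ^ y = z^-1).

Lemma yx : y ^ x = y * z. Proof. by rewrite r1 commgEl mulKVg. Qed.
Lemma zyz : z * y * z = y. Proof. by rewrite (conjgC z y) r6 mulgKV. Qed.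
Lemma yzX j : (y * z) ^+ j = y ^+ j * (if odd j then z else 1).
Proof.
elim: j => [|j IH]; first by rewrite !expg0 mulg1.
rewrite expgSr IH expgSr /=; case: (odd j) => /=.
  by rewrite mulg1 -!mulgA (mulgA z y z) zyz.
by rewrite mulg1 mulgA.
Qed.
Lemma yJxX j t : (y ^+ j) ^ (x ^+ t) = y ^+ j * (if odd t && odd j then z else 1).
Proof.
elim: t => [|t IH]; first by rewrite conjg1 /= mulg1.
rewrite expgSr conjgM IH conjMg conjXg yx yzX /=.
by case: (odd t); case: (odd j) => /=; rewrite ?conj1g ?r5 ?mulg1 ?mulgK.
Qed.
Lemma E2' j t w : y ^+ j * (x ^+ t * w) =
  x ^+ t * (y ^+ j * (zp z (if odd t && odd j then 1 else 0)%R * w)).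
Proof.
rewrite mulgA (conjgC (y ^+ j)) yJxX !mulgA; congr (_ * _ * _ * _).
by case: (_ && _); rewrite ?zp1 ?zp0.
Qed.

Lemma xD (i i' : 'Z_N) : x ^+ (nat_of_ord (i + i')%R) = x ^+ i * x ^+ i'.
Proof.
have hx : x ^+ (Zp_trunc N).+2 = 1 by rewrite Zp_cast ?N_gt1.
by rewrite /= expg_mod // expgD.
Qed.
Lemma yD (j j' : 'Z_M) : y ^+ (nat_of_ord (j + j')%R) = y ^+ j * y ^+ j'.
Proof.
have hy : y ^+ (Zp_trunc M).+2 = 1 by rewrite Zp_cast ?M_gt1.
by rewrite /= expg_mod // expgD.
Qed.

Definition fG (g : GT n m) : rT := x ^+ g.1.1 * (y ^+ g.1.2 * zp z g.2).

Lemma fG_morph : {morph fG : g h / g * h}.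
Proof.
move=> [[i j] k] [[i' j'] k']; rewrite mulGE /fG /mulG /= xD yD.
rewrite -!mulgA (zpJinvX' r4 _ _ _ r5) E2' (zpD' r4) (zpJinvX' r4 _ _ _ r6) -(zpD r4).
rewrite !mulgA; congr (_ * _ * _ * zp z _).
rewrite /parN /parM.
by case: (odd i'); case: (odd j); case: (odd j'); rewrite /sg /=; ring.
Qed.

End TargetG.

Section GrpG.
Variables n m : nat.
Local Notation N := (2 ^ n.+1)%N.
Local Notation M := (2 ^ m.+2)%N.
Local Open Scope group_scope.

Definition gX : GT n m := (1%R, 0%R, 0%R).
Definition gY : GT n m := (0%R, 1%R, 0%R).
Definition gZ : GT n m := (0%R, 0%R, 1%R).

Lemma gXpow t : gX ^+ t = (t%:R, 0, 0)%R.
Proof.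
elim: t => [|t IH]; first by [].
by rewrite expgSr IH mulGE /mulG /= ?parM0 ?parN0 ?andbF /sg /= ?mul0r ?mulr1 ?addr0 ?add0r ?natr1.
Qed.
Lemma gYpow t : gY ^+ t = (0, t%:R, 0)%R.
Proof.
elim: t => [|t IH]; first by [].
by rewrite expgSr IH mulGE /mulG /= ?parM0 ?parN0 ?andbF /sg /= ?mul0r ?mulr1 ?addr0 ?add0r ?natr1.
Qed.
Lemma gZpow t : gZ ^+ t = (0, 0, t%:R)%R.
Proof.
elim: t => [|t IH]; first by [].
by rewrite expgSr IH mulGE /mulG /= ?parM0 ?parN0 ?andbF /sg /= ?mul0r ?mulr1 ?addr0 ?add0r ?natr1.
Qed.

Lemma gdecomp (g : GT n m) : g = gX ^+ g.1.1 * (gY ^+ g.1.2 * gZ ^+ g.2).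
Proof.
case: g => [[i j] k]; rewrite gXpow gYpow gZpow !mulGE /mulG /= !natr_Zp.
by rewrite ?parM0 ?parN0 ?andbF /sg /= ?mul0r ?mulr1 ?addr0 ?add0r.
Qed.

Lemma gen_setT_G : <[gX]> <*> <[gY]> <*> <[gZ]> = [set: GT n m].
Proof.
apply/eqP; rewrite eqEsubset subsetT /=; apply/subsetP => g _.
rewrite (gdecomp g); set J := _ <*> _.
have hX : gX \in J by rewrite (subsetP (joing_subl _ _)) // (subsetP (joing_subl _ _)) // cycle_id.
have hY : gY \in J by rewrite (subsetP (joing_subl _ _)) // (subsetP (joing_subr _ _)) // cycle_id.
have hZ : gZ \in J by rewrite (subsetP (joing_subr _ _)) // cycle_id.
by rewrite !groupM ?groupX.
Qed.

Lemma conj_inv (gT : finGroupType) (a w : gT) : a * w * a = w -> a ^ w = a^-1.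
Proof.
move=> h; apply: (mulIg a); rewrite mulVg; apply: (mulgI w).
by rewrite mulg1 mulgA -conjgC.
Qed.
Lemma conj_id (gT : finGroupType) (a w : gT) : a * w = w * a -> a ^ w = a.
Proof. by move=> h; apply: (mulgI w); rewrite -conjgC. Qed.
Lemma comm_of (gT : finGroupType) (a b c : gT) : b * a = a * b * c -> c = [~ b, a].
Proof. by move=> h; apply: (mulgI (a * b)); rewrite -commgC. Qed.

Ltac gsimp := rewrite ?mulGE /mulG /= ?(addr0, add0r, parN0, parN1, parM0, parM1, mul0r, mul1r, mulr1, andbF, andbT) /sg /=.

Lemma gR1 : gZ = [~ gY, gX].
Proof. by apply: comm_of; gsimp. Qed.
Lemma gR2 : gX ^+ N = 1.
Proof. by rewrite gXpow pchar_Zp ?N_gt1 ?oneGE. Qed.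
Lemma gR3 : gY ^+ M = 1.
Proof. by rewrite gYpow pchar_Zp ?M_gt1 ?oneGE. Qed.
Lemma gR4 : gZ ^+ 4 = 1.
Proof. by rewrite gZpow pchar_Zp // oneGE. Qed.
Lemma gR5 : gZ ^ gX = gZ^-1.
Proof. by apply: conj_inv; gsimp; rewrite addNr. Qed.
Lemma gR6 : gZ ^ gY = gZ^-1.
Proof. by apply: conj_inv; gsimp; rewrite addNr. Qed.

Lemma G_homg : [set: GT n m] \homg Grp (x : y : z : (z = [~ y, x], x ^+ N = 1, y ^+ M = 1,
                               z ^+ 4 = 1, z ^ x = z^-1, z ^ y = z^-1)).
Proof.
move: gX gY gZ gen_setT_G gR1 gR2 gR3 gR4 gR5 gR6 => a b c h0 h1 h2 h3 h4 h5 h6.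
apply/existsP; exists (a, b, c); rewrite /= !xpair_eqE.
by rewrite h0 -h1 h2 h3 h4 h5 h6 !eqxx.
Qed.

Lemma join3_mem (gT : finGroupType) (a b c : gT) :
  [/\ a \in <[a]> <*> <[b]> <*> <[c]>, b \in <[a]> <*> <[b]> <*> <[c]> &
      c \in <[a]> <*> <[b]> <*> <[c]>].
Proof.
split.
- by rewrite (subsetP (joing_subl _ _)) // (subsetP (joing_subl _ _)) // cycle_id.
- by rewrite (subsetP (joing_subl _ _)) // (subsetP (joing_subr _ _)) // cycle_id.
- by rewrite (subsetP (joing_subr _ _)) // cycle_id.
Qed.

Lemma G_free (rT : finGroupType) (K : {group rT}) :
  K \homg Grp (x : y : z : (z = [~ y, x], x ^+ N = 1, y ^+ M = 1,
                               z ^+ 4 = 1, z ^ x = z^-1, z ^ y = z^-1)) ->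
  K \homg [set: GT n m].
Proof.
case/existsP=> -[[x y] z] /= /eqP[defK r1 r2 r3 r4 r5 r6].
have fM := fG_morph r1 r2 r3 r4 r5 r6.
apply/homgP; exists (@Morphism _ _ [set: GT n m] _ (in2W fM)).
rewrite morphimEdom; apply/eqP; rewrite eqEsubset; apply/andP; split.
  apply/subsetP => _ /imsetP[g _ ->]; rewrite -defK /fG.
  have [hx hy hz] := join3_mem x y z.
  by rewrite !groupM ?groupX.
rewrite -defK !join_subG !cycle_subG -andbA; apply/and3P; split; apply/imsetP.
- by exists gX; rewrite ?inE // /fG /= expg1 expg0 /zp /= expg0 !mulg1.
- by exists gY; rewrite ?inE // /fG /= expg1 expg0 /zp /= expg0 mulg1 mul1g.
- by exists gZ; rewrite ?inE // /fG /= expg0 /zp /= expg1 !mul1g.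
Qed.

Lemma G_iso : [set: GT n m]%G \isog Grp (x : y : z : (z = [~ y, x], x ^+ N = 1, y ^+ M = 1,
                               z ^+ 4 = 1, z ^ x = z^-1, z ^ y = z^-1)).
Proof. by apply: intro_isoGrp; [exact: G_homg | move=> rT K; exact: G_free]. Qed.

End GrpG.

Section TargetH.
Variables (n m : nat) (rT : finGroupType) (a b c : rT).
Local Notation N := (2 ^ n.+1)%N.
Local Notation M := (2 ^ m.+2)%N.
Local Open Scope group_scope.
Hypotheses (r1 : c = [~ b, a]) (r2 : a ^+ N = 1) (r3 : b ^+ M = 1) (r4 : c ^+ 4 = 1)
  (r5 : c ^ a = c^-1) (r6 : c ^ b = c).

Lemma ba : b ^ a = b * c. Proof. by rewrite r1 commgEl mulKVg. Qed.
Lemma cbC : commute c b. Proof. by rewrite /commute (conjgC c b) r6. Qed.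
Lemma bJaX j t : (b ^+ j) ^ (a ^+ t) = b ^+ j * (if odd t then c ^+ j else 1).
Proof.
elim: t => [|t IH]; first by rewrite conjg1 /= mulg1.
have bc : commute b c by apply/esym/cbC.
rewrite expgSr conjgM IH conjMg conjXg ba (expgMn _ bc).
rewrite /=; case: (odd t) => /=; by rewrite ?conj1g ?conjXg ?r5 ?expVgn ?mulg1 ?mulgK.
Qed.
Lemma zpc_nat j : zp c (j%:R)%R = c ^+ j.
Proof. by rewrite /zp val_Zp_nat // expg_mod. Qed.
Lemma E2H j t w : b ^+ j * (a ^+ t * w) =
  a ^+ t * (b ^+ j * (zp c (if odd t then (j%:R)%R else 0%R) * w)).
Proof.
rewrite mulgA (conjgC (b ^+ j)) bJaX !mulgA; congr (_ * _ * _ * _).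
by case: (odd t); rewrite ?zpc_nat ?zp0.
Qed.
Lemma E3H k t w : zp c k * (b ^+ t * w) = b ^+ t * (zp c k * w).
Proof. by rewrite !mulgA; congr (_ * _); rewrite /zp; apply: commuteX2; apply: cbC. Qed.

Lemma aD (i i' : 'Z_N) : a ^+ (nat_of_ord (i + i')%R) = a ^+ i * a ^+ i'.
Proof.
have hx : a ^+ (Zp_trunc N).+2 = 1 by rewrite Zp_cast ?N_gt1.
by rewrite /= expg_mod // expgD.
Qed.
Lemma bD (j j' : 'Z_M) : b ^+ (nat_of_ord (j + j')%R) = b ^+ j * b ^+ j'.
Proof.
have hy : b ^+ (Zp_trunc M).+2 = 1 by rewrite Zp_cast ?M_gt1.
by rewrite /= expg_mod // expgD.
Qed.

Definition fH (g : HT n m) : rT := a ^+ g.1.1 * (b ^+ g.1.2 * zp c g.2).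

Lemma fH_morph : {morph fH : g h / g * h}.
Proof.
move=> [[i j] k] [[i' j'] k']; rewrite mulHE /fH /mulH /= aD bD.
rewrite -!mulgA (zpJinvX' r4 _ _ _ r5) E2H (zpD' r4) E3H -(zpD r4).
rewrite !mulgA; congr (_ * _ * _ * zp c _).
Qed.

End TargetH.

Section GrpH.
Variables n m : nat.
Local Notation N := (2 ^ n.+1)%N.
Local Notation M := (2 ^ m.+2)%N.
Local Open Scope group_scope.

Definition hX : HT n m := (1%R, 0%R, 0%R).
Definition hY : HT n m := (0%R, 1%R, 0%R).
Definition hZ : HT n m := (0%R, 0%R, 1%R).

Ltac hsimp := rewrite ?mulHE /mulH /= ?(addr0, add0r, parN0, parN1, parM0, parM1, mul0r, mul1r, mulr1, andbF, andbT, castM0) /sg /=.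

Lemma hXpow t : hX ^+ t = (t%:R, 0, 0)%R.
Proof. elim: t => [|t IH]; first by []. rewrite expgSr IH; hsimp. by rewrite ?addr0 natr1. Qed.
Lemma hYpow t : hY ^+ t = (0, t%:R, 0)%R.
Proof. elim: t => [|t IH]; first by []. rewrite expgSr IH; hsimp. by rewrite ?addr0 natr1. Qed.
Lemma hZpow t : hZ ^+ t = (0, 0, t%:R)%R.
Proof. elim: t => [|t IH]; first by []. rewrite expgSr IH; hsimp. by rewrite ?addr0 natr1. Qed.

Lemma hdecomp (g : HT n m) : g = hX ^+ g.1.1 * (hY ^+ g.1.2 * hZ ^+ g.2).
Proof.
case: g => [[i j] k]; rewrite hXpow hYpow hZpow; hsimp.
by rewrite !natr_Zp ?castM0 ?mul0r ?mulr1 ?addr0 ?add0r.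
Qed.

Lemma gen_setT_H : <[hX]> <*> <[hY]> <*> <[hZ]> = [set: HT n m].
Proof.
apply/eqP; rewrite eqEsubset subsetT /=; apply/subsetP => g _.
rewrite (hdecomp g); have [hx hy hz] := join3_mem hX hY hZ.
by rewrite !groupM ?groupX.
Qed.

Lemma hR1 : hZ = [~ hY, hX].
Proof. by apply: comm_of; hsimp; rewrite /castM /= mulr1n. Qed.
Lemma hR2 : hX ^+ N = 1.
Proof. by rewrite hXpow pchar_Zp ?N_gt1 ?oneHE. Qed.
Lemma hR3 : hY ^+ M = 1.
Proof. by rewrite hYpow pchar_Zp ?M_gt1 ?oneHE. Qed.
Lemma hR4 : hZ ^+ 4 = 1.
Proof. by rewrite hZpow pchar_Zp // oneHE. Qed.
Lemma hR5 : hZ ^ hX = hZ^-1.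
Proof. by apply: conj_inv; hsimp; rewrite addNr. Qed.
Lemma hR6 : hZ ^ hY = hZ.
Proof. by apply: conj_id; hsimp. Qed.


Lemma H_homg : [set: HT n m] \homg Grp (a : b : c : (c = [~ b, a], a ^+ N = 1, b ^+ M = 1,
                               c ^+ 4 = 1, c ^ a = c^-1, c ^ b = c)).
Proof.
move: hX hY hZ gen_setT_H hR1 hR2 hR3 hR4 hR5 hR6 => a b c h0 h1 h2 h3 h4 h5 h6.
apply/existsP; exists (a, b, c); rewrite /= !xpair_eqE.
by rewrite h0 -h1 h2 h3 h4 h5 h6 !eqxx.
Qed.

Lemma H_free (rT : finGroupType) (K : {group rT}) :
  K \homg Grp (a : b : c : (c = [~ b, a], a ^+ N = 1, b ^+ M = 1,
                               c ^+ 4 = 1, c ^ a = c^-1, c ^ b = c)) ->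
  K \homg [set: HT n m].
Proof.
case/existsP=> -[[x y] z] /= /eqP[defK r1 r2 r3 r4 r5 r6].
have fM := fH_morph r1 r2 r3 r4 r5 r6.
apply/homgP; exists (@Morphism _ _ [set: HT n m] _ (in2W fM)).
rewrite morphimEdom; apply/eqP; rewrite eqEsubset; apply/andP; split.
  apply/subsetP => _ /imsetP[g _ ->]; rewrite -defK /fH.
  have [hx hy hz] := join3_mem x y z.
  by rewrite !groupM ?groupX.
rewrite -defK !join_subG !cycle_subG -andbA; apply/and3P; split; apply/imsetP.
- by exists hX; rewrite ?inE // /fH /= expg1 expg0 /zp /= expg0 !mulg1.
- by exists hY; rewrite ?inE // /fH /= expg1 expg0 /zp /= expg0 mulg1 mul1g.
- by exists hZ; rewrite ?inE // /fH /= expg0 /zp /= expg1 !mul1g.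
Qed.

Lemma H_iso : [set: HT n m]%G \isog Grp (a : b : c : (c = [~ b, a], a ^+ N = 1, b ^+ M = 1,
                               c ^+ 4 = 1, c ^ a = c^-1, c ^ b = c)).
Proof. by apply: intro_isoGrp; [exact: H_homg | move=> rT K; exact: H_free]. Qed.

End GrpH.

Close Scope ring_scope.
Local Open Scope group_scope.

Theorem lemma7p3 (m n : nat) (h2m : 2 < m) (hmn : m < n) :
  (exists (gT : finGroupType) (G : {group gT}),
     G \isog Grp (x : y : z : (z = [~ y, x], x ^+ (2 ^ n) = 1, y ^+ (2 ^ m) = 1,
                               z ^+ 4 = 1, z ^ x = z^-1, z ^ y = z^-1))) /\
  (exists (gT : finGroupType) (H : {group gT}),
     H \isog Grp (a : b : c : (c = [~ b, a], a ^+ (2 ^ n) = 1, b ^+ (2 ^ m) = 1,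
                               c ^+ 4 = 1, c ^ a = c^-1, c ^ b = c))) /\
  (forall (gT : finGroupType) (K : {group gT}),
     K \isog Grp (x : y : z : (z = [~ y, x], x ^+ (2 ^ n) = 1, y ^+ (2 ^ m) = 1,
                               z ^+ 4 = 1, z ^ x = z^-1, z ^ y = z^-1)) ->
     ~ K \isog Grp (a : b : c : (c = [~ b, a], a ^+ (2 ^ n) = 1, b ^+ (2 ^ m) = 1,
                                 c ^+ 4 = 1, c ^ a = c^-1, c ^ b = c))).
Proof.
have [n0 en] : exists n0, n = n0.+1 by case: n hmn => [|n'] //; exists n'.
have [m0 em] : exists m0, m = m0.+2 by case: m h2m {hmn} => [|[|m']] //; exists m'.
subst n m.
split; [|split].
- by exists (GT n0 m0), [set: GT n0 m0]%G; exact: G_iso.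
- by exists (HT n0 m0), [set: HT n0 m0]%G; exact: H_iso.
move=> gT K hG hH.
have h1 : [set: HT n0 m0]%G \homg K by rewrite hH; apply: isoGrp_hom (H_iso n0 m0).
rewrite hG in h1.
case/existsP: h1 => -[[x y] z] /= /eqP[defK r1 r2 r3 r4 r5 r6].
exact: (HT_notG hmn defK r1 r3 r6).
Qed.
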